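(* Let $\alpha\in(1,2)$ and let $p\ge2$ be an integer. Then $f^{p,\alpha}(\theta)\ge0$ for all $\theta\in[-\pi,\pi]$, $f^{p,\alpha}(\theta)=0$ for $\theta\in[-\pi,\pi]$ only at $\theta=0$, and this zero has order $\alpha$, i.e. $f^{p,\alpha}(\theta)/|\theta|^\alpha$ tends to a finite positive limit as $\theta\to0$.
   Context: For real $\alpha$ and integer $p\ge 2$, $f^{p,\alpha}(\theta)=\sum_{l\in\mathbb Z}|\theta+2l\pi|^{\alpha}\left(\frac{\sin(\theta/2+l\pi)}{\theta/2+l\pi}\right)^{p+1}$ (with $\frac{\sin x}{x}:=1$ at $x=0$). *)

(* Defs.v *)
From Stdlib Require Import Reals ZArith.
From Coquelicot Require Import Coquelicot.
Open Scope R_scope.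

(* |x|^a for real a, with the convention |0|^a = 0 (a > 0 throughout). *)
Definition abspow (x a : R) : R :=
  if Req_EM_T x 0 then 0 else Rpower (Rabs x) a.

Definition sinc (x : R) : R :=
  if Req_EM_T x 0 then 1 else sin x / x.

Definition fterm (p : nat) (alpha theta : R) (l : Z) : R :=
  abspow (theta + 2 * IZR l * PI) alpha * (sinc (theta / 2 + IZR l * PI)) ^ (p + 1).

(* Sum over l in Z, written as term 0 + sum_{n>=1} (term n + term (-n));
   the series is absolutely convergent for p >= 2, alpha < 2. *)
Definition f_p_alpha (p : nat) (alpha theta : R) : R :=
  Series (fun n : nat =>
    if Nat.eqb n 0 then fterm p alpha theta 0%Z
    else fterm p alpha theta (Z.of_nat n) + fterm p alpha theta (- Z.of_nat n)%Z).

(* Main.v *)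
Require Import Defs.
From Stdlib Require Import Reals ZArith Lra Lia.
From Coquelicot Require Import Coquelicot.
Open Scope R_scope.

Lemma PI_gt3 : 3 < PI.
Proof. pose proof PI2_3_2; lra. Qed.

Lemma exp_le_mono : forall x y, x <= y -> exp x <= exp y.
Proof. intros x y H; destruct (Rle_lt_or_eq_dec _ _ H) as [H1|H1].
  left; apply exp_increasing; auto. subst; lra. Qed.

Lemma Rpower_pos : forall x y, 0 < Rpower x y.
Proof. intros; unfold Rpower; apply exp_pos. Qed.

Lemma Rpower_dec_base : forall a b e, 0 < a -> a <= b -> e <= 0 -> Rpower b e <= Rpower a e.
Proof. intros a b e Ha Hab He; unfold Rpower; apply exp_le_mono.
  pose proof (ln_le a b Ha Hab); nra. Qed.

Lemma Rpower_dec_base_strict : forall a b e, 0 < a -> a < b -> e < 0 -> Rpower b e < Rpower a e.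
Proof. intros a b e Ha Hab He; unfold Rpower; apply exp_increasing.
  pose proof (ln_increasing a b Ha Hab); nra. Qed.

Lemma Rpower_div_pow : forall z a (k : nat), 0 < z -> Rpower z a / z ^ k = Rpower z (a - INR k).
Proof. intros z a k Hz. unfold Rminus. rewrite Rpower_plus, Rpower_Ropp, Rpower_pow; auto. Qed.

Lemma sin_addn : forall y n, sin (y + INR n * PI) = (-1)^n * sin y.
Proof. intros y n; induction n.
  - simpl. replace (y + 0 * PI) with y by ring. ring.
  - rewrite S_INR. replace (y + (INR n + 1) * PI) with ((y + INR n * PI) + PI) by ring.
    rewrite neg_sin, IHn. simpl. ring. Qed.

Lemma sin_subn : forall y n, sin (y - INR n * PI) = (-1)^n * sin y.
Proof. intros y n; induction n.
  - simpl. replace (y - 0 * PI) with y by ring. ring.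
  - rewrite S_INR.
    assert (E: sin (y - INR n * PI) = - sin (y - (INR n + 1) * PI)).
    { rewrite <- neg_sin. f_equal. ring. }
    assert (E2: sin (y - (INR n + 1) * PI) = - sin (y - INR n * PI)) by lra.
    rewrite E2, IHn. simpl. ring. Qed.

Lemma abspow_opp : forall x a, abspow (- x) a = abspow x a.
Proof. intros; unfold abspow. destruct (Req_EM_T (-x) 0); destruct (Req_EM_T x 0); try lra.
  rewrite Rabs_Ropp; auto. Qed.

Lemma sinc_opp : forall x, sinc (- x) = sinc x.
Proof. intros; unfold sinc. destruct (Req_EM_T (-x) 0); destruct (Req_EM_T x 0); try lra.
  rewrite sin_neg. field. auto. Qed.

Lemma fterm_opp : forall p a t l, fterm p a (- t) l = fterm p a t (- l).
Proof. intros; unfold fterm. rewrite opp_IZR.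
  replace (t + 2 * - IZR l * PI) with (- (- t + 2 * IZR l * PI)) by ring.
  replace (t / 2 + - IZR l * PI) with (- (- t / 2 + IZR l * PI)) by field.
  rewrite abspow_opp, sinc_opp; auto. Qed.

Lemma f_even : forall p a t, f_p_alpha p a (- t) = f_p_alpha p a t.
Proof. intros; unfold f_p_alpha. apply Series_ext; intros n.
  destruct n; simpl.
  - rewrite fterm_opp. reflexivity.
  - rewrite !fterm_opp; simpl; ring. Qed.

Lemma pow_le_dec : forall q m n, 0 <= q <= 1 -> (m <= n)%nat -> q ^ n <= q ^ m.
Proof. intros q m n Hq Hmn. replace n with (m + (n - m))%nat by lia.
  rewrite pow_add. pose proof (pow_le q m (proj1 Hq)).
  assert (q ^ (n - m) <= 1). { rewrite <- (pow1 (n - m)). apply pow_incr; lra. }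
  pose proof (pow_le q (n-m) (proj1 Hq)). nra. Qed.

Lemma gbound : forall (p : nat) (al y s N : R), (2 <= p)%nat -> al <= 3 -> 1 <= N ->
  N * PI - PI / 2 <= Rabs y -> Rabs (sin y) = s ->
  Rabs (abspow (2 * y) al * sinc y ^ (p + 1)) <= 8 * s ^ 3 * Rpower N (al - 3).
Proof.
  intros p al y s N Hp Hal HN Hy Hs. pose proof PI_gt3 as HPI.
  assert (Hy0 : 1 < Rabs y) by nra.
  assert (Hyn : y <> 0) by (intro E; subst; rewrite Rabs_R0 in Hy0; lra).
  unfold abspow, sinc.
  destruct (Req_EM_T (2 * y) 0) as [E|_]; [lra|].
  destruct (Req_EM_T y 0) as [E|_]; [lra|].
  rewrite Rabs_mult, (Rabs_pos_eq (Rpower _ _)) by (left; apply Rpower_pos).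
  rewrite <- RPow_abs, Rabs_div by auto. rewrite Hs.
  rewrite Rabs_mult, (Rabs_pos_eq 2) by lra.
  assert (Hs1 : 0 <= s <= 1). { rewrite <- Hs. split. apply Rabs_pos.
    apply Rabs_le. apply SIN_bound. }
  set (q := s / Rabs y).
  assert (Hq : 0 <= q <= 1). { unfold q; split. apply Rdiv_le_0_compat; lra.
    apply Rcomplements.Rle_div_l; lra. }
  assert (H3 : q ^ (p + 1) <= q ^ 3) by (apply pow_le_dec; [auto| lia]).
  assert (HP := Rpower_pos (2 * Rabs y) al).
  apply Rle_trans with (Rpower (2 * Rabs y) al * q ^ 3).
  { apply Rmult_le_compat_l; lra. }
  assert (E : Rpower (2 * Rabs y) al * q ^ 3 = 8 * s ^ 3 * (Rpower (2 * Rabs y) al / (2 * Rabs y) ^ 3)).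
  { unfold q. field. lra. }
  rewrite E, Rpower_div_pow by lra.
  replace (INR 3) with 3 by (simpl; ring).
  apply Rmult_le_compat_l. { pose proof (pow_le s 3 (proj1 Hs1)); lra. }
  assert (N <= 2 * Rabs y) by nra.
  apply Rpower_dec_base; lra.
Qed.

Lemma tele : forall a t, 0 < a -> 0 < t ->
  t * Rpower (a + 1) (- t - 1) <= Rpower a (- t) - Rpower (a + 1) (- t).
Proof.
  intros a t Ha Ht. unfold Rpower.
  set (A := ln a). set (B := ln (a + 1)).
  assert (EA : exp A = a) by (apply exp_ln; lra).
  assert (EB : exp B = a + 1) by (apply exp_ln; lra).
  assert (E1 : exp (A - B) = a / (a + 1)).
  { unfold Rminus; rewrite exp_plus, exp_Ropp, EA, EB; field; lra. }
  assert (E2 : exp (- B) = / (a + 1)) by (rewrite exp_Ropp, EB; auto).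
  assert (K1 : 1 + (A - B) <= exp (A - B)) by apply exp_ineq1_le.
  assert (K2 : B - A >= / (a + 1)).
  { rewrite E1 in K1. assert (a / (a+1) = 1 - / (a+1)) by (field; lra). lra. }
  assert (K3 : 1 + t * (B - A) <= exp (t * (B - A))) by apply exp_ineq1_le.
  replace ((- t - 1) * B) with (- t * B + - B) by ring.
  replace (- t * A) with (- t * B + t * (B - A)) by ring.
  rewrite !exp_plus, E2.
  assert (HE := exp_pos (- t * B)).
  assert (0 < / (a + 1)) by (apply Rinv_0_lt_compat; lra).
  assert (K4 : exp (t * (B - A)) - 1 >= t * / (a + 1)) by nra.
  nra.
Qed.

Lemma Rpower_1b : forall x, Rpower 1 x = 1.
Proof. intros; unfold Rpower; rewrite ln_1, Rmult_0_r, exp_0; auto. Qed.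

Lemma w_psum : forall t N, 0 < t ->
  sum_f_R0 (fun n => Rpower (INR (S n)) (- t - 1)) N <= 1 + / t * (1 - Rpower (INR (S N)) (- t)).
Proof.
  intros t N Ht. induction N.
  - simpl. rewrite !Rpower_1b. lra.
  - rewrite tech5; cbv beta.
    pose proof (tele (INR (S N)) t (lt_0_INR _ (Nat.lt_0_succ N)) Ht) as T.
    rewrite (S_INR (S N)).
    assert (X : Rpower (INR (S N) + 1) (- t - 1) <= / t * (Rpower (INR (S N)) (- t) - Rpower (INR (S N) + 1) (- t))).
    { apply (Rmult_le_reg_l t); auto. rewrite <- Rmult_assoc, Rinv_r, Rmult_1_l by lra. lra. }
    lra.
Qed.

Lemma w_ex : forall al, al < 2 -> ex_series (fun n => Rpower (INR (S n)) (al - 3)).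
Proof.
  intros al Hal. set (t := 2 - al).
  assert (Ht : 0 < t) by (unfold t; lra).
  replace (al - 3) with (- t - 1) by (unfold t; ring).
  assert (H : ex_finite_lim_seq (sum_n (fun n => Rpower (INR (S n)) (- t - 1)))).
  { apply ex_finite_lim_seq_incr with (M := 1 + / t).
    - intros n. rewrite !sum_n_Reals. rewrite tech5; cbv beta. pose proof (Rpower_pos (INR (S (S n))) (-t-1)). lra.
    - intros n. rewrite sum_n_Reals. eapply Rle_trans. apply w_psum; auto.
      pose proof (Rpower_pos (INR (S n)) (-t)). assert (0 < / t) by (apply Rinv_0_lt_compat; lra). nra. }
  destruct H as [l Hl]. exists l. exact Hl.
Qed.

Definition Ut p al th (n : nat) := fterm p al th (Z.of_nat (S n)).
Definition Vt p al th (n : nat) := fterm p al th (- Z.of_nat (S n)).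
Definition wt al (n : nat) := Rpower (INR (S n)) (al - 3).

Lemma Rabs_m1pow : forall n x, Rabs ((-1) ^ n * x) = Rabs x.
Proof. intros; rewrite Rabs_mult, pow_1_abs; ring. Qed.

Lemma U_bound : forall p al th n, (2 <= p)%nat -> al <= 3 -> -PI <= th <= PI ->
  Rabs (Ut p al th n) <= 8 * Rabs (sin (th / 2)) ^ 3 * wt al n.
Proof.
  intros p al th n Hp Hal Hth. unfold Ut, fterm, wt. rewrite <- INR_IZR_INZ.
  replace (th + 2 * INR (S n) * PI) with (2 * (th / 2 + INR (S n) * PI)) by field.
  assert (HN : 1 <= INR (S n)) by (rewrite S_INR; pose proof (pos_INR n); lra).
  apply gbound; auto.
  - eapply Rle_trans; [| apply Rle_abs]. lra.
  - rewrite sin_addn, Rabs_m1pow; auto.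
Qed.

Lemma V_bound : forall p al th n, (2 <= p)%nat -> al <= 3 -> -PI <= th <= PI ->
  Rabs (Vt p al th n) <= 8 * Rabs (sin (th / 2)) ^ 3 * wt al n.
Proof.
  intros p al th n Hp Hal Hth. unfold Vt, fterm, wt. rewrite opp_IZR, <- INR_IZR_INZ.
  replace (th + 2 * - INR (S n) * PI) with (2 * (th / 2 + - INR (S n) * PI)) by field.
  replace (th / 2 + - INR (S n) * PI) with (th / 2 - INR (S n) * PI) by ring.
  assert (HN : 1 <= INR (S n)) by (rewrite S_INR; pose proof (pos_INR n); lra).
  apply gbound; auto.
  - rewrite <- Rabs_Ropp. eapply Rle_trans; [| apply Rle_abs]. lra.
  - rewrite sin_subn, Rabs_m1pow; auto.
Qed.

Lemma ex_dom : forall (a : nat -> R) c al, al < 2 ->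
  (forall n, Rabs (a n) <= c * wt al n) ->
  ex_series a /\ ex_series (fun n => Rabs (a n)) /\ Rabs (Series a) <= c * Series (wt al).
Proof.
  intros a c al Hal H.
  assert (Hw : ex_series (wt al)) by (apply w_ex; auto).
  assert (Hb : ex_series (fun n => wt al n * c)) by (apply ex_series_scal_r; auto).
  assert (Ha : ex_series (fun n => Rabs (a n))).
  { apply (@ex_series_le R_AbsRing R_CompleteNormedModule) with (b := fun n => wt al n * c); auto.
    intros n. change (norm (Rabs (a n))) with (Rabs (Rabs (a n))). rewrite Rabs_Rabsolu.
    rewrite Rmult_comm; auto. }
  split; [apply ex_series_Rabs; auto|]. split; auto.
  eapply Rle_trans. apply Series_Rabs; auto.
  eapply Rle_trans. apply Series_le with (b := fun n => wt al n * c); auto.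
  intros n; split; [apply Rabs_pos| rewrite Rmult_comm; auto].
  rewrite Series_scal_r. lra.
Qed.

Lemma f_decomp : forall p al th, (2 <= p)%nat -> al < 2 -> -PI <= th <= PI ->
  ex_series (Ut p al th) /\ ex_series (Vt p al th) /\
  f_p_alpha p al th = fterm p al th 0 + Series (Ut p al th) + Series (Vt p al th) /\
  Rabs (Series (Ut p al th)) <= 8 * Rabs (sin (th / 2)) ^ 3 * Series (wt al) /\
  Rabs (Series (Vt p al th)) <= 8 * Rabs (sin (th / 2)) ^ 3 * Series (wt al).
Proof.
  intros p al th Hp Hal Hth.
  destruct (ex_dom (Ut p al th) (8 * Rabs (sin (th / 2)) ^ 3) al Hal) as [HU [_ BU]].
  { intros; apply U_bound; auto; lra. }
  destruct (ex_dom (Vt p al th) (8 * Rabs (sin (th / 2)) ^ 3) al Hal) as [HV [_ BV]].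
  { intros; apply V_bound; auto; lra. }
  split; auto. split; auto. split; auto.
  unfold f_p_alpha.
  set (A := fun n : nat => if Nat.eqb n 0 then fterm p al th 0%Z
      else fterm p al th (Z.of_nat n) + fterm p al th (- Z.of_nat n)%Z).
  assert (HA : forall n, A (S n) = Ut p al th n + Vt p al th n) by reflexivity.
  assert (HexA : ex_series A).
  { apply ex_series_incr_1. eapply ex_series_ext. intros n; symmetry; apply HA.
    apply (ex_series_plus (Ut p al th) (Vt p al th)); auto. }
  rewrite Series_incr_1 by auto.
  rewrite (Series_ext _ _ HA), Series_plus by auto. unfold A at 1. simpl. ring.
Qed.

Definition phi p al z := Rpower z al / z ^ (p + 1).
Definition sg p (n : nat) := ((-1) ^ n) ^ (p + 1).

Lemma uu_closed : forall p al th n, 0 < th <= PI ->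
  fterm p al th (Z.of_nat n) = (2 * sin (th / 2)) ^ (p + 1) * sg p n * phi p al (th + 2 * INR n * PI).
Proof.
  intros p al th n Hth. pose proof (pos_INR n). pose proof PI_gt3.
  unfold fterm, abspow, sinc, phi, sg. rewrite <- INR_IZR_INZ.
  set (x := th + 2 * INR n * PI).
  assert (Hx : 0 < x) by (unfold x; nra).
  destruct (Req_EM_T x 0) as [E|_]; [lra|].
  destruct (Req_EM_T (th / 2 + INR n * PI) 0) as [E|_]; [unfold x in Hx; lra|].
  rewrite Rabs_pos_eq by lra. rewrite sin_addn.
  replace ((-1) ^ n * sin (th / 2) / (th / 2 + INR n * PI)) with ((-1) ^ n * (2 * sin (th / 2)) * / x)
    by (unfold x in *; field; lra).
  rewrite !Rpow_mult_distr, pow_inv. field. apply pow_nonzero; lra.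
Qed.

Lemma vv_closed : forall p al th n, 0 < th <= PI ->
  Vt p al th n = (2 * sin (th / 2)) ^ (p + 1) * sg p n * phi p al (2 * INR (S n) * PI - th).
Proof.
  intros p al th n Hth. pose proof (pos_INR n). pose proof PI_gt3.
  unfold Vt, fterm, abspow, sinc, phi, sg. rewrite opp_IZR, <- INR_IZR_INZ.
  rewrite S_INR.
  set (b := 2 * (INR n + 1) * PI - th).
  assert (Hb : 0 < b) by (unfold b; nra).
  destruct (Req_EM_T (th + 2 * - (INR n + 1) * PI) 0) as [E|_]; [unfold b in Hb; lra|].
  destruct (Req_EM_T (th / 2 + - (INR n + 1) * PI) 0) as [E|_]; [unfold b in Hb; lra|].
  replace (Rabs (th + 2 * - (INR n + 1) * PI)) with b
    by (rewrite <- Rabs_Ropp, Rabs_pos_eq; unfold b in *; nra).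
  replace (th / 2 + - (INR n + 1) * PI) with (th / 2 - INR (S n) * PI) by (rewrite S_INR; ring).
  rewrite sin_subn. rewrite S_INR.
  replace ((-1) ^ S n * sin (th / 2) / (th / 2 - (INR n + 1) * PI)) with ((-1) ^ n * (2 * sin (th / 2)) * / b)
    by (simpl; unfold b in *; field; lra).
  rewrite !Rpow_mult_distr, pow_inv. field. apply pow_nonzero; lra.
Qed.

Lemma alt_bound : forall h : nat -> R, (forall n, 0 <= h n) -> (forall n, h (S n) <= h n) ->
  forall N, h 0%nat - h 1%nat <= sum_f_R0 (fun n => (-1) ^ n * h n) N <= h 0%nat.
Proof.
  intros h H0 H1 N. revert h H0 H1. induction N; intros h H0 H1.
  - simpl. specialize (H0 1%nat). lra.
  - rewrite decomp_sum by lia. simpl Init.Nat.pred.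
    assert (E : sum_f_R0 (fun i => (-1) ^ S i * h (S i)) N = - sum_f_R0 (fun n => (-1) ^ n * h (S n)) N).
    { clear. induction N; [simpl; ring|]. rewrite !tech5, IHN. simpl. ring. }
    rewrite E. destruct (IHN (fun n => h (S n))) as [A B]; auto.
    simpl in *. specialize (H1 1%nat). specialize (H0 2%nat). lra.
Qed.

Lemma pos_bound : forall h : nat -> R, (forall n, 0 <= h n) -> forall N, h 0%nat <= sum_f_R0 h N.
Proof. intros h H N; induction N; simpl; [lra|]. specialize (H (S N)); lra. Qed.

Lemma series_lb : forall g L, ex_series g -> (forall N, L <= sum_f_R0 g N) -> L <= Series g.
Proof.
  intros g L Hg HN. pose proof (Series_correct g Hg) as Hs.
  assert (Hl : is_lim_seq (sum_n g) (Series g)) by exact Hs.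
  assert (Rbar_le L (Series g)).
  { apply (is_lim_seq_le (fun _ => L) (sum_n g)); auto.
    intros n; rewrite sum_n_Reals; auto. apply is_lim_seq_const. }
  simpl in H; auto.
Qed.

Lemma sq_m1 : forall n, ((-1) ^ n) ^ 2 = 1.
Proof. induction n; simpl in *; [ring|]. ring_simplify. ring_simplify in IHn. lra. Qed.

Lemma sg_cases : forall p, (forall n, sg p n = 1) \/ (forall n, sg p n = (-1) ^ n).
Proof.
  intros p. destruct (Nat.Even_or_Odd p) as [[k Hk]|[k Hk]]; subst p.
  - right. intros n; unfold sg. replace (2 * k + 1)%nat with (S (2 * k)) by lia.
    rewrite <- tech_pow_Rmult, pow_mult, sq_m1, pow1. ring.
  - left. intros n; unfold sg. replace (2 * k + 1 + 1)%nat with (2 * (k + 1))%nat by lia.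
    rewrite pow_mult, sq_m1, pow1. ring.
Qed.

Lemma phi_dec : forall p al a b, (2 <= p)%nat -> al < 2 -> 0 < a -> a <= b -> phi p al b <= phi p al a.
Proof.
  intros p al a b Hp Hal Ha Hab. unfold phi. rewrite !Rpower_div_pow by lra.
  assert (3 <= INR (p + 1)) by (replace 3 with (INR 3) by (simpl; ring); apply le_INR; lia).
  apply Rpower_dec_base; lra. Qed.

Lemma phi_dec_strict : forall p al a b, (2 <= p)%nat -> al < 2 -> 0 < a -> a < b -> phi p al b < phi p al a.
Proof.
  intros p al a b Hp Hal Ha Hab. unfold phi. rewrite !Rpower_div_pow by lra.
  assert (3 <= INR (p + 1)) by (replace 3 with (INR 3) by (simpl; ring); apply le_INR; lia).
  apply Rpower_dec_base_strict; lra. Qed.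

Lemma phi_pos : forall p al a, 0 < a -> 0 < phi p al a.
Proof. intros. unfold phi. rewrite Rpower_div_pow by lra. apply Rpower_pos. Qed.

Lemma f_pos : forall p al th, (2 <= p)%nat -> 1 < al < 2 -> 0 < th <= PI -> 0 < f_p_alpha p al th.
Proof.
  intros p al th Hp Hal Hth. pose proof PI_gt3.
  destruct (f_decomp p al th Hp (proj2 Hal) ltac:(lra)) as [HU [HV [Ef _]]].
  set (uu := fun n : nat => fterm p al th (Z.of_nat n)).
  assert (Hu : ex_series uu) by (apply ex_series_incr_1; exact HU).
  assert (Eu : Series uu = fterm p al th 0 + Series (Ut p al th)).
  { rewrite Series_incr_1 by auto. reflexivity. }
  set (c := (2 * sin (th / 2)) ^ (p + 1)).
  assert (Hc : 0 < c).
  { unfold c. apply pow_lt. assert (0 < sin (th / 2)) by (apply sin_gt_0; lra). lra. }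
  set (m := fun n : nat => phi p al (th + 2 * INR n * PI) + phi p al (2 * INR (S n) * PI - th)).
  assert (Eg : forall n, uu n + Vt p al th n = c * (sg p n * m n)).
  { intros n. unfold uu. rewrite uu_closed, vv_closed by lra. unfold m, c. ring. }
  assert (Hg : ex_series (fun n => sg p n * m n)).
  { assert (E1 : forall n, (uu n + Vt p al th n) * / c = sg p n * m n).
    { intros n. rewrite Eg. field. lra. }
    eapply ex_series_ext. exact E1.
    apply ex_series_scal_r. apply (ex_series_plus uu (Vt p al th)); auto. }
  assert (Ef2 : f_p_alpha p al th = c * Series (fun n => sg p n * m n)).
  { rewrite Ef, <- Eu, <- Series_plus by auto.
    rewrite (Series_ext _ _ Eg), Series_scal_l. reflexivity. }
  rewrite Ef2. apply Rmult_lt_0_compat; auto.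
  pose proof (pos_INR 0) as I0.
  assert (Hm0 : forall n, 0 <= m n).
  { intros n; unfold m. pose proof (pos_INR n). rewrite S_INR.
    assert (A1 : 0 < th + 2 * INR n * PI) by nra. assert (A2 : 0 < 2 * (INR n + 1) * PI - th) by nra.
    pose proof (phi_pos p al _ A1). pose proof (phi_pos p al _ A2). lra. }
  assert (Hm1 : forall n, m (S n) <= m n).
  { intros n; unfold m. pose proof (pos_INR n). rewrite !S_INR.
    assert (phi p al (th + 2 * (INR n + 1) * PI) <= phi p al (th + 2 * INR n * PI)) by (apply phi_dec; auto; nra; lra).
    assert (phi p al (2 * (INR n + 1 + 1) * PI - th) <= phi p al (2 * (INR n + 1) * PI - th)) by (apply phi_dec; auto; nra; lra).
    lra. }
  assert (Hm01 : m 1%nat < m 0%nat).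
  { unfold m. simpl INR.
    assert (phi p al (th + 2 * 1 * PI) < phi p al (th + 2 * 0 * PI)) by (apply phi_dec_strict; auto; nra; lra).
    assert (phi p al (2 * (1 + 1) * PI - th) <= phi p al (2 * 1 * PI - th)) by (apply phi_dec; auto; nra; lra).
    lra. }
  destruct (sg_cases p) as [S1|S2].
  - rewrite (Series_ext _ m) by (intros n; rewrite S1; ring).
    assert (m 0%nat <= Series m).
    { apply series_lb. eapply ex_series_ext; [|exact Hg]. intros n; simpl; rewrite S1; ring.
      apply pos_bound; auto. }
    specialize (Hm0 1%nat). lra.
  - rewrite (Series_ext _ (fun n => (-1) ^ n * m n)) by (intros n; rewrite S2; ring).
    assert (m 0%nat - m 1%nat <= Series (fun n => (-1) ^ n * m n)).
    { apply series_lb. eapply ex_series_ext; [|exact Hg]. intros n; simpl; rewrite S2; ring.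
      intros N; apply alt_bound; auto. }
    lra.
Qed.

Lemma f_zero : forall p al, (2 <= p)%nat -> 1 < al < 2 -> f_p_alpha p al 0 = 0.
Proof.
  intros p al Hp Hal. pose proof PI_gt3.
  destruct (f_decomp p al 0 Hp (proj2 Hal) ltac:(lra)) as [_ [_ [Ef [BU BV]]]].
  replace (0 / 2) with 0 in BU, BV by field. rewrite sin_0, Rabs_R0 in BU, BV.
  replace (8 * 0 ^ 3 * Series (wt al)) with 0 in BU, BV by ring.
  assert (Series (Ut p al 0) = 0) by (pose proof (Rabs_pos (Series (Ut p al 0))); apply Rabs_eq_0; lra).
  assert (Series (Vt p al 0) = 0) by (pose proof (Rabs_pos (Series (Vt p al 0))); apply Rabs_eq_0; lra).
  rewrite Ef, H0, H1. unfold fterm, abspow.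
  destruct (Req_EM_T (0 + 2 * IZR 0 * PI) 0) as [_|E]. ring.
  exfalso; apply E; simpl; ring.
Qed.

Lemma f_pos_all : forall p al th, (2 <= p)%nat -> 1 < al < 2 -> -PI <= th <= PI -> th <> 0 ->
  0 < f_p_alpha p al th.
Proof.
  intros p al th Hp Hal Hth H0. destruct (Rlt_or_le 0 th).
  - apply f_pos; auto; lra.
  - rewrite <- (Ropp_involutive th), f_even. apply f_pos; auto; lra.
Qed.

Lemma sinc_bound : forall y, 0 < Rabs y <= 1 -> 1 - y ^ 2 <= sin y / y <= 1.
Proof.
  assert (Hpos : forall y, 0 < y <= 1 -> 1 - y ^ 2 <= sin y / y <= 1).
  { intros y Hy. pose proof PI_gt3.
    pose proof (sin_lt_x y (proj1 Hy)).
    destruct (sin_bound y 0 ltac:(lra) ltac:(lra)) as [L _].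
    unfold sin_approx, sin_term in L. simpl in L.
    split.
    - apply Rcomplements.Rle_div_r; [lra|]. nra.
    - apply Rcomplements.Rle_div_l; lra. }
  intros y Hy. destruct (Rlt_or_le 0 y).
  - apply Hpos. rewrite Rabs_pos_eq in Hy; lra.
  - assert (y <> 0) by (intro; subst; rewrite Rabs_R0 in Hy; lra).
    rewrite Rabs_left1 in Hy by lra.
    replace (sin y / y) with (sin (- y) / (- y)) by (rewrite sin_neg; field; auto).
    replace (y ^ 2) with ((- y) ^ 2) by ring. apply Hpos; lra.
Qed.

Lemma bern : forall q k, 0 <= q <= 1 -> 1 - INR k * (1 - q) <= q ^ k <= 1.
Proof.
  intros q k Hq. induction k.
  - simpl. lra.
  - rewrite S_INR. simpl. split; [|nra].
    pose proof (pos_INR k). nra.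
Qed.

Lemma K_nonneg : forall al, al < 2 -> 0 <= Series (wt al).
Proof.
  intros al Hal. apply series_lb. apply w_ex; auto.
  intros N. eapply Rle_trans; [|apply pos_bound]. left; apply Rpower_pos.
  intros; left; apply Rpower_pos.
Qed.

Lemma g_bound : forall p al th, (2 <= p)%nat -> 1 < al < 2 -> 0 < Rabs th <= 1 ->
  Rabs (f_p_alpha p al th / abspow th al - 1) <= (INR (p + 1) + 2 * Series (wt al)) * Rabs th.
Proof.
  intros p al th Hp Hal Hth. pose proof PI_gt3.
  assert (Hth0 : th <> 0) by (intro; subst; rewrite Rabs_R0 in Hth; lra).
  assert (Ha1 := Rle_abs th). assert (Ha2 := Rle_abs (- th)). rewrite Rabs_Ropp in Ha2.
  assert (Hr : -PI <= th <= PI) by lra.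
  destruct (f_decomp p al th Hp (proj2 Hal) Hr) as [_ [_ [Ef [BU BV]]]].
  set (P := Rpower (Rabs th) al).
  assert (HP : abspow th al = P).
  { unfold abspow. destruct (Req_EM_T th 0); [lra|auto]. }
  set (q := sin (th / 2) / (th / 2)).
  assert (H0 : fterm p al th 0 = P * q ^ (p + 1)).
  { unfold fterm. replace (th + 2 * IZR 0 * PI) with th by (simpl; ring).
    replace (th / 2 + IZR 0 * PI) with (th / 2) by (simpl; ring). rewrite HP.
    unfold sinc. destruct (Req_EM_T (th / 2) 0); [lra|auto]. }
  assert (Hy : 0 < Rabs (th / 2) <= 1).
  { unfold Rdiv; rewrite Rabs_mult, Rabs_inv, (Rabs_pos_eq 2) by lra. lra. }
  destruct (sinc_bound (th / 2) Hy) as [Q1 Q2]. fold q in Q1, Q2.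
  assert (Ha : Rabs th ^ 2 = th ^ 2) by (unfold Rabs; destruct Rcase_abs; ring).
  assert (Hq : 0 <= q <= 1) by nra.
  destruct (bern q (p + 1) Hq) as [B1 B2].
  assert (A1 : Rabs (q ^ (p + 1) - 1) <= INR (p + 1) * Rabs th).
  { rewrite Rabs_left1 by lra. pose proof (pos_INR (p+1)).
    assert (INR (p + 1) * (1 - q) <= INR (p + 1) * (th ^ 2 / 4)).
    { apply Rmult_le_compat_l; auto. lra. }
    assert (th ^ 2 / 4 <= Rabs th) by nra.
    nra. }
  assert (Hs : Rabs (sin (th / 2)) <= Rabs th / 2).
  { replace (sin (th / 2)) with (q * (th / 2)) by (unfold q; field; auto).
    rewrite Rabs_mult, (Rabs_pos_eq q) by lra.
    assert (E2 : Rabs (th / 2) = Rabs th / 2) by (unfold Rdiv; rewrite Rabs_mult, Rabs_inv, (Rabs_pos_eq 2) by lra; auto). rewrite E2. nra. }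
  assert (HK := K_nonneg al (proj2 Hal)). set (K := Series (wt al)) in *.
  assert (Hs3 : Rabs (sin (th / 2)) ^ 3 <= (Rabs th / 2) ^ 3) by (apply pow_incr; split; [apply Rabs_pos|auto]).
  assert (A2 : Rabs (Series (Ut p al th) + Series (Vt p al th)) <= 2 * Rabs th ^ 3 * K).
  { eapply Rle_trans. apply Rabs_triang.
    assert (8 * Rabs (sin (th / 2)) ^ 3 * K <= 8 * (Rabs th / 2) ^ 3 * K).
    { apply Rmult_le_compat_r; auto. lra. }
    assert (8 * (Rabs th / 2) ^ 3 = Rabs th ^ 3) by field. nra. }
  assert (A3 : Rabs th ^ 2 <= P).
  { unfold P. replace (Rabs th ^ 2) with (Rpower (Rabs th) (INR 2)) by (apply Rpower_pow; lra).
    unfold Rpower. apply exp_le_mono. simpl INR.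
    assert (ln (Rabs th) <= 0) by (rewrite <- ln_1; apply ln_le; lra). nra. }
  assert (HPp : 0 < P) by apply Rpower_pos.
  assert (A4 : Rabs ((Series (Ut p al th) + Series (Vt p al th)) / P) <= 2 * K * Rabs th).
  { rewrite Rabs_div by lra. rewrite (Rabs_pos_eq P) by lra.
    apply Rcomplements.Rle_div_l; auto.
    assert (2 * Rabs th ^ 3 * K = 2 * K * Rabs th * Rabs th ^ 2) by ring.
    assert (0 <= 2 * K * Rabs th) by (pose proof (Rabs_pos th); nra).
    nra. }
  rewrite HP, Ef, H0.
  replace ((P * q ^ (p + 1) + Series (Ut p al th) + Series (Vt p al th)) / P - 1)
    with ((q ^ (p + 1) - 1) + (Series (Ut p al th) + Series (Vt p al th)) / P) by (field; lra).
  eapply Rle_trans. apply Rabs_triang. lra.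
Qed.

Lemma lim_lin : forall C s, is_lim (fun y => 1 + s * (C * Rabs y)) 0 1.
Proof.
  intros C s.
  assert (Hc : continuity_pt (fun y => 1 + s * (C * Rabs y)) 0).
  { apply continuity_pt_plus. apply continuity_pt_const; intros ? ?; auto.
    apply continuity_pt_scal. apply continuity_pt_scal. apply Rcontinuity_abs. }
  pose proof (is_lim_continuity _ 0 Hc) as H. cbv beta in H.
  rewrite Rabs_R0 in H. replace (1 + s * (C * 0)) with 1 in H by ring. exact H.
Qed.

Theorem corollary5p3 (alpha : R) (p : nat) :
  1 < alpha < 2 -> (2 <= p)%nat ->
  (forall theta, -PI <= theta <= PI -> 0 <= f_p_alpha p alpha theta) /\
  (forall theta, -PI <= theta <= PI -> (f_p_alpha p alpha theta = 0 <-> theta = 0)) /\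
  (exists L : R, 0 < L /\
     is_lim (fun theta => f_p_alpha p alpha theta / abspow theta alpha) 0 L).
Proof.
  intros Hal Hp. split; [|split].
  - intros th Hth. destruct (Req_EM_T th 0) as [E|E].
    + subst. rewrite f_zero; auto; lra.
    + left; apply f_pos_all; auto.
  - intros th Hth. split.
    + intros Hf. destruct (Req_EM_T th 0) as [E|E]; auto.
      pose proof (f_pos_all p alpha th Hp Hal Hth E). lra.
    + intros E; subst; apply f_zero; auto.
  - exists 1. split; [lra|].
    set (C := INR (p + 1) + 2 * Series (wt alpha)).
    apply is_lim_le_le_loc with (f := fun y => 1 + (-1) * (C * Rabs y)) (g := fun y => 1 + 1 * (C * Rabs y)).
    + exists (mkposreal 1 Rlt_0_1). intros y Hy Hy0.
      change (Rabs (y - 0) < 1) in Hy. rewrite Rminus_0_r in Hy.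
      assert (0 < Rabs y) by (apply Rabs_pos_lt; auto).
      pose proof (g_bound p alpha y Hp Hal ltac:(lra)) as G. fold C in G.
      apply Rabs_le_between' in G. lra.
    + apply lim_lin.
    + apply lim_lin.
Qed.
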